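(* Let $G=(V,E,I,\{s,t\})$ be an inner Eulerian grapht with $|E|\le\omega$ in which $s$ is linked. Then there is a linkage $\mathcal{P}$ of $s$ such that there is a family of pairwise edge-disjoint cycles in $G-E(\mathcal{P})$ covering $\delta_{G-E(\mathcal{P})}(t)$.
   Context: Graphs may have parallel edges but no loops; all paths finite. With terminal set $\{s,t\}$, the grapht is inner Eulerian if no $X\subseteq V\setminus\{s,t\}$ has the number of edges with exactly one end in $X$ equal to an odd natural number. $\delta(x)$ is the set of edges at $x$. A system of edge-disjoint $st$-paths links $s$ if it covers $\delta(s)$; $s$ is linked if such a system exists; a linkage of $s$ is a system linking $s$ in which each path contains an edge of $\delta(s)$. $E(\mathcal{P})$ is the union of edge sets of paths in $\mathcal{P}$. *)

(* Defs.v *)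
From Stdlib Require Import List Arith.
Import ListNotations.


(* A multigraph: every edge e has two distinct ends [end1 e], [end2 e];
   the incidence relation I is "x is an end of e". *)
Record multigraph := MkGraph {
  vtx : Type;
  edg : Type;
  end1 : edg -> vtx;
  end2 : edg -> vtx;
  noloop : forall e, end1 e <> end2 e
}.

Arguments end1 {_}.
Arguments end2 {_}.
Section Defs.
Variable G : multigraph.

Definition incident (e : edg G) (x : vtx G) : Prop := end1 e = x \/ end2 e = x.

Definition delta (x : vtx G) : edg G -> Prop := fun e => incident e x.

Definition joins (e : edg G) (u v : vtx G) : Prop :=
  (end1 e = u /\ end2 e = v) \/ (end1 e = v /\ end2 e = u).

Definition countable_edges : Prop :=
  exists f : edg G -> nat, forall e1 e2, f e1 = f e2 -> e1 = e2.

Definition cut (X : vtx G -> Prop) : edg G -> Prop :=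
  fun e => (X (end1 e) /\ ~ X (end2 e)) \/ (~ X (end1 e) /\ X (end2 e)).

Definition odd_finite (A : edg G -> Prop) : Prop :=
  exists l : list (edg G), NoDup l /\ (forall e, In e l <-> A e) /\ Nat.odd (length l) = true.

Definition inner_eulerian (s t : vtx G) : Prop :=
  forall X : vtx G -> Prop, ~ X s -> ~ X t -> ~ odd_finite (cut X).

(* [walk_from v es vs]: starting at v, traverse es = [e1;..;ek] visiting
   vs = [v1;..;vk], edge e_i joining v_{i-1} and v_i. *)
Fixpoint walk_from (v : vtx G) (es : list (edg G)) (vs : list (vtx G)) : Prop :=
  match es, vs with
  | [], [] => True
  | e :: es', w :: vs' => joins e v w /\ walk_from w es' vs'
  | _, _ => False
  end.

Record walk := MkWalk { wstart : vtx G; wedges : list (edg G); wverts : list (vtx G) }.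

Definition st_path (s t : vtx G) (p : walk) : Prop :=
  wstart p = s /\ walk_from s (wedges p) (wverts p) /\
  NoDup (s :: wverts p) /\ last (s :: wverts p) s = t.

(* a cycle: closed walk with distinct vertices and distinct edges
   (at least one edge; length 2 allowed for parallel edges) *)
Definition cycle (c : walk) : Prop :=
  walk_from (wstart c) (wedges c) (wverts c) /\
  wedges c <> [] /\ NoDup (wedges c) /\ NoDup (wverts c) /\
  last (wverts c) (wstart c) = wstart c.

Definition edge_disjoint_family (F : walk -> Prop) : Prop :=
  forall p q, F p -> F q -> p <> q ->
    forall e, In e (wedges p) -> ~ In e (wedges q).

Definition st_system (s t : vtx G) (P : walk -> Prop) : Prop :=
  (forall p, P p -> st_path s t p) /\ edge_disjoint_family P.

Definition sys_edges (P : walk -> Prop) : edg G -> Prop :=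
  fun e => exists p, P p /\ In e (wedges p).

Definition links_s (s t : vtx G) (P : walk -> Prop) : Prop :=
  st_system s t P /\ forall e, delta s e -> sys_edges P e.

Definition is_linked (s t : vtx G) : Prop := exists P, links_s s t P.

Definition linkage (s t : vtx G) (P : walk -> Prop) : Prop :=
  links_s s t P /\ forall p, P p -> exists e, In e (wedges p) /\ delta s e.

End Defs.
Arguments incident {G}. Arguments delta {G}. Arguments joins {G}.
Arguments cut {G}. Arguments odd_finite {G}. Arguments inner_eulerian {G}.
Arguments walk_from {G}. Arguments MkWalk {G}. Arguments wstart {G}.
Arguments wedges {G}. Arguments wverts {G}. Arguments st_path {G}.
Arguments cycle {G}. Arguments edge_disjoint_family {G}. Arguments st_system {G}.
Arguments sys_edges {G}. Arguments links_s {G}. Arguments is_linked {G}.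
Arguments linkage {G}.

(* Main.v *)
Require Import Defs.
From Stdlib Require Import List Arith Bool ClassicalEpsilon Classical Lia.
Import ListNotations.

Lemma nodup_app_disj {A : Type} (l1 l2 : list A) x :
  NoDup (l1 ++ l2) -> In x l1 -> In x l2 -> False.
Proof.
  induction l1 as [|a l1 IH]; simpl; [tauto|].
  intros H [->|Hx] H2.
  - inversion H; subst. apply H3, in_or_app; auto.
  - inversion H; subst. eauto.
Qed.

Lemma last_cons_same {A : Type} (v : A) vs : last (v :: vs) v = last vs v.
Proof. destruct vs; reflexivity. Qed.

Lemma last_indep {A : Type} (w : A) l d d' : last (w :: l) d = last (w :: l) d'.
Proof. revert w; induction l as [|a l IH]; intros w; simpl; auto. apply (IH a). Qed.

Lemma last_cons2 {A : Type} (v w : A) l d : last (v :: w :: l) d = last (w :: l) w.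
Proof. change (last (w :: l) d = last (w :: l) w). apply last_indep. Qed.

Lemma last_in {A : Type} (l : list A) d : In (last l d) (d :: l).
Proof.
  induction l as [|a l IH]; simpl; auto.
  destruct l; simpl; auto. simpl in IH. destruct IH as [H|H]; auto.
Qed.

Lemma last_app_cons {A : Type} (l1 l2 : list A) a d :
  last (l1 ++ a :: l2) d = last (a :: l2) d.
Proof.
  induction l1 as [|b l1 IH]; simpl; auto.
  rewrite IH. destruct l1; simpl; auto.
Qed.

Lemma last_app_nonempty {A : Type} (l1 l2 : list A) d :
  l2 <> [] -> last (l1 ++ l2) d = last l2 d.
Proof.
  intros Hn. induction l1 as [|b l1 IH]; simpl; auto.
  rewrite IH. destruct l1; simpl; auto. destruct l2; [congruence|auto].
Qed.

Lemma joins_ends {G : multigraph} (e : edg G) v w :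
  joins e v w -> (end1 e = v \/ end1 e = w) /\ (end2 e = v \/ end2 e = w).
Proof. unfold joins; intuition. Qed.

Lemma walk_ends {G : multigraph} v (es : list (edg G)) vs e :
  walk_from v es vs -> In e es -> In (end1 e) (v :: vs) /\ In (end2 e) (v :: vs).
Proof.
  revert v vs; induction es as [|a es IH]; intros v vs Hw He; [destruct He|].
  destruct vs as [|w vs]; [destruct Hw|]. destruct Hw as [Hj Hw].
  destruct He as [<-|He].
  - apply joins_ends in Hj. simpl. intuition.
  - destruct (IH _ _ Hw He). simpl in *. intuition.
Qed.

Lemma walk_nodup_edges {G : multigraph} v (es : list (edg G)) vs :
  walk_from v es vs -> NoDup (v :: vs) -> NoDup es.
Proof.
  revert v vs; induction es as [|a es IH]; intros v vs Hw Hn; [constructor|].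
  destruct vs as [|w vs]; [destruct Hw|]. destruct Hw as [Hj Hw].
  inversion Hn; subst. constructor; [|eapply IH; eauto].
  intro Ha. destruct (walk_ends _ _ _ _ Hw Ha) as [K1 K2].
  unfold joins in Hj. destruct Hj as [[E1 _]|[_ E2]]; subst; auto.
Qed.

Lemma walk_head_unique {G : multigraph} v (es : list (edg G)) vs e1 e2 :
  walk_from v es vs -> NoDup (v :: vs) -> In e1 es -> In e2 es ->
  incident e1 v -> incident e2 v -> e1 = e2.
Proof.
  intros Hw Hn.
  destruct es as [|a es]; [intros []|]. destruct vs as [|w vs]; [destruct Hw|].
  destruct Hw as [Hj Hw]. inversion Hn as [|? ? Hnv Hn']; subst.
  assert (K : forall e, In e (a :: es) -> incident e v -> e = a).
  { intros e [<-|He] Hi; auto. destruct (walk_ends _ _ _ _ Hw He).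
    exfalso. destruct Hi as [Hi|Hi]; rewrite Hi in *; auto. }
  intros J1 J2 I1 I2. rewrite (K _ J1 I1), (K _ J2 I2). auto.
Qed.

Lemma walk_app {G : multigraph} v (es1 : list (edg G)) vs1 es2 vs2 :
  walk_from v es1 vs1 -> walk_from (last (v :: vs1) v) es2 vs2 ->
  walk_from v (es1 ++ es2) (vs1 ++ vs2).
Proof.
  revert v vs1; induction es1 as [|a es IH]; intros v vs1 Hw1 Hw2.
  - destruct vs1; [|destruct Hw1]. exact Hw2.
  - destruct vs1 as [|w vs1]; [destruct Hw1|]. destruct Hw1 as [Hj Hw1].
    simpl. split; auto. apply IH; auto. rewrite last_cons2 in Hw2. exact Hw2.
Qed.

Lemma walk_split {G : multigraph} v (es : list (edg G)) vs x :
  walk_from v es vs -> In x (v :: vs) ->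
  exists es1 es2 pre vs1 vs2, es = es1 ++ es2 /\ v :: vs = pre ++ x :: vs2 /\
    walk_from x es2 vs2 /\ walk_from v es1 vs1 /\ last (v :: vs1) v = x /\
    incl (v :: vs1) (pre ++ [x]).
Proof.
  revert v vs; induction es as [|a es IH]; intros v vs Hw Hx.
  - destruct vs; [|destruct Hw]. destruct Hx as [<-|[]].
    exists [], [], [], [], []. simpl. repeat split; auto. intros y [<-|[]]; simpl; auto.
  - destruct vs as [|w vs]; [destruct Hw|]. destruct (classic (x = v)) as [->|Hne].
    + exists [], (a :: es), [], [], (w :: vs). simpl. destruct Hw; repeat split; auto.
      intros y [<-|[]]; simpl; auto.
    + destruct Hw as [Hj Hw]. destruct Hx as [Hx|Hx]; [congruence|].
      destruct (IH _ _ Hw Hx) as (es1 & es2 & pre & vs1 & vs2 & E1 & E2 & W2 & W1 & L & I).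
      exists (a :: es1), es2, (v :: pre), (w :: vs1), vs2.
      rewrite E1, E2. repeat split; auto.
      * rewrite last_cons2. exact L.
      * intros y [<-|Hy]; [simpl; auto | right; apply I; exact Hy].
Qed.

Lemma walk_shorten {G : multigraph} v (es : list (edg G)) vs :
  walk_from v es vs -> exists es' vs', walk_from v es' vs' /\ NoDup (v :: vs') /\
    last (v :: vs') v = last (v :: vs) v /\ incl es' es /\ incl vs' vs.
Proof.
  revert v vs; induction es as [|a es IH]; intros v vs Hw.
  - destruct vs; [|destruct Hw]. exists [], []. split; [exact I|]. split; [repeat constructor; simpl; tauto|]. split; [reflexivity|]. split; apply incl_refl.

  - destruct vs as [|w vs]; [destruct Hw|]. destruct Hw as [Hj Hw].
    destruct (IH _ _ Hw) as (es' & vs' & W & N & L & I1 & I2).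
    destruct (classic (In v (w :: vs'))) as [Hin|Hnin].
    + destruct (walk_split _ _ _ _ W Hin) as (es1 & es2 & pre & vs1 & vs2 & E1 & E2 & W2 & _ & _ & _).
      exists es2, vs2. split; [exact W2|]. split.
      { rewrite E2 in N. clear -N. induction pre; simpl in *; auto. inversion N; auto. }
      split.
      { rewrite last_cons2, <- L, E2, last_app_cons. apply last_indep. }
      split.
      { intros y Hy. right. apply I1. rewrite E1. apply in_or_app; auto. }
      { intros y Hy. assert (Hy' : In y (w :: vs')). { rewrite E2. apply in_or_app. right. right. auto. }
        destruct Hy' as [<-|Hy']; simpl; auto. }
    + exists (a :: es'), (w :: vs'). split; [split; auto|]. split; [constructor; auto|].
      split.
      { rewrite !last_cons2. exact L. }
      split.
      { intros y [<-|Hy]; simpl; auto. }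
      { intros y [<-|Hy]; simpl; auto. }
Qed.

Definition decb (P : Prop) : bool := if excluded_middle_informative P then true else false.
Lemma decb_true P : decb P = true <-> P.
Proof. unfold decb; destruct (excluded_middle_informative P); split; intros; try congruence; tauto. Qed.
Lemma decb_false P : ~ P -> decb P = false.
Proof. unfold decb; destruct (excluded_middle_informative P); tauto. Qed.

Definition cutb {G : multigraph} (X : vtx G -> Prop) (e : edg G) : bool :=
  xorb (decb (X (end1 e))) (decb (X (end2 e))).

Lemma cutb_spec {G : multigraph} (X : vtx G -> Prop) e : cutb X e = true <-> cut X e.
Proof.
  unfold cutb, cut. pose proof (decb_true (X (end1 e))). pose proof (decb_true (X (end2 e))).
  destruct (decb (X (end1 e))), (decb (X (end2 e))); simpl; intuition auto; try congruence.
Qed.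

Lemma cutb_joins {G : multigraph} (X : vtx G -> Prop) e v w :
  joins e v w -> cutb X e = xorb (decb (X v)) (decb (X w)).
Proof. unfold cutb; intros [[-> ->]|[-> ->]]; auto. apply xorb_comm. Qed.

Lemma walk_parity {G : multigraph} (X : vtx G -> Prop) v es vs :
  walk_from v es vs ->
  Nat.even (length (filter (cutb X) es)) = Bool.eqb (decb (X v)) (decb (X (last (v :: vs) v))).
Proof.
  revert v vs; induction es as [|a es IH]; intros v vs Hw.
  - destruct vs; [|destruct Hw]. simpl. destruct (decb (X v)); auto.
  - destruct vs as [|w vs]; [destruct Hw|]. destruct Hw as [Hj Hw].
    rewrite last_cons2. specialize (IH _ _ Hw).
    remember (last (w :: vs) w) as z. clear Heqz.
    simpl filter. rewrite (cutb_joins X _ _ _ Hj).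
    destruct (decb (X v)), (decb (X w)), (decb (X z)); cbn [xorb Bool.eqb length negb] in *;
    try (rewrite Nat.even_succ, <- Nat.negb_even, IH); auto.
Qed.

Lemma even_flat {G : multigraph} (f : edg G -> bool) (L : list (walk G)) :
  (forall w, In w L -> Nat.even (length (filter f (wedges w))) = true) ->
  Nat.even (length (filter f (flat_map (@wedges G) L))) = true.
Proof.
  induction L as [|a L IH]; intros H; simpl; auto.
  rewrite filter_app, length_app, Nat.even_add, H by (left; auto).
  rewrite IH by (intros; apply H; right; auto). reflexivity.
Qed.

Lemma nodup_snoc {A : Type} (a : A) l : NoDup (a :: l) -> NoDup (l ++ [a]).
Proof.
  intros H. inversion H; subst. apply NoDup_app; auto. repeat constructor; auto.
  intros x Hx [<-|[]]; auto.
Qed.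

Lemma nodup_snoc2 {A : Type} (a b : A) l : NoDup (a :: l) -> ~ In b (a :: l) -> NoDup (a :: l ++ [b]).
Proof.
  intros H Hb. change (NoDup ((a :: l) ++ [b])). apply NoDup_app; auto. repeat constructor; auto.
  intros x Hx [<-|[]]; auto.
Qed.

Lemma last_app_walk {A : Type} (l1 l2 : list A) v d :
  last (v :: l1 ++ l2) d = last (last (v :: l1) d :: l2) d.
Proof.
  revert v; induction l1 as [|a l1 IH]; intros v; auto.
  change (last (a :: l1 ++ l2) d = last (last (a :: l1) d :: l2) d). apply IH.
Qed.

Definition used {G : multigraph} (st : list (walk G) * list (walk G)) : list (edg G) :=
  flat_map (@wedges G) (fst st ++ snd st).

Definition Qgood {G : multigraph} (s t : vtx G) (st : list (walk G) * list (walk G))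
  (Q : walk G -> Prop) : Prop :=
  (forall q, Q q -> st_path s t q /\ forall e, In e (wedges q) -> ~ In e (used st)) /\
  edge_disjoint_family Q /\
  (forall e, delta s e -> ~ In e (used st) -> sys_edges Q e).

Definition Inv {G : multigraph} (s t : vtx G) (st : list (walk G) * list (walk G)) : Prop :=
  (forall p, In p (fst st) -> st_path s t p) /\
  (forall c, In c (snd st) -> cycle c /\ forall e, In e (wedges c) -> ~ delta s e) /\
  NoDup (used st) /\ exists Q, Qgood s t st Q.

Definition handled {G : multigraph} (s t : vtx G) (e : edg G) (st : list (walk G) * list (walk G)) :=
  (delta s e -> In e (flat_map (@wedges G) (fst st))) /\ (delta t e -> In e (used st)).

Definition ext {G : multigraph} (st st' : list (walk G) * list (walk G)) :=
  incl (fst st) (fst st') /\ incl (snd st) (snd st').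

Lemma st_path_nodup {G : multigraph} (s t : vtx G) p : st_path s t p -> NoDup (wedges p).
Proof. intros (_ & W & N & _). eapply walk_nodup_edges; eauto. Qed.

Lemma step_used {G : multigraph} (s t : vtx G) st e :
  Inv s t st -> In e (used st) -> handled s t e st.
Proof.
  intros (HP & HC & HN & _) He. split; auto. intros Hs.
  unfold used in He. rewrite flat_map_app in He. apply in_app_or in He.
  destruct He as [He|He]; auto. apply in_flat_map in He. destruct He as (c & Hc & Hec).
  exfalso. apply (proj2 (HC c Hc) e Hec Hs).
Qed.

Lemma step_Q {G : multigraph} (s t : vtx G) Ps Cs Q q e :
  Inv s t (Ps, Cs) -> Qgood s t (Ps, Cs) Q -> Q q -> In e (wedges q) ->
  Inv s t (q :: Ps, Cs) /\ handled s t e (q :: Ps, Cs).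
Proof.
  intros (HP & HC & HN & _) (HQ1 & HQ2 & HQ3) Hq He.
  destruct (HQ1 q Hq) as [Hqp Hqu].
  split; [|split; intros _; simpl; apply in_or_app; auto].
  split; [intros p [<-|Hp]; auto|]. split; [exact HC|].
  split.
  { unfold used; simpl. apply NoDup_app; auto. eapply st_path_nodup; eauto. }
  exists (fun r => Q r /\ r <> q). split; [|split].
  - intros r [Hr Hne]. split; [apply HQ1; auto|]. intros g Hg Hu. unfold used in Hu; simpl in Hu.
    apply in_app_or in Hu. destruct Hu as [Hu|Hu].
    + exact (HQ2 r q Hr Hq Hne g Hg Hu).
    + exact (proj2 (HQ1 r Hr) g Hg Hu).
  - intros p r [Hp _] [Hr _]. apply HQ2; auto.
  - intros g Hs Hu. unfold used in Hu; simpl in Hu.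
    destruct (HQ3 g Hs) as (r & Hr & Hg).
    + intro. apply Hu, in_or_app; auto.
    + exists r. split; auto. split; auto. intros ->. apply Hu, in_or_app; auto.
Qed.

Definition Rp {G : multigraph} (st : list (walk G) * list (walk G)) (Q : walk G -> Prop) (e g : edg G) :=
  ~ In g (used st) /\ ~ sys_edges Q g /\ g <> e.

Definition Xr {G : multigraph} st Q e (u : vtx G) (x : vtx G) :=
  exists es vs, walk_from x es vs /\ last (x :: vs) x = u /\ forall g, In g es -> Rp st Q e g.

Lemma Rp_not_s {G : multigraph} (s t : vtx G) st Q e g :
  Qgood s t st Q -> Rp st Q e g -> ~ delta s g.
Proof. intros (_ & _ & H3) (H1 & H2 & _) Hs. apply H2, H3; auto. Qed.

Lemma Xr_verts {G : multigraph} st Q e (u : vtx G) x es vs :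
  walk_from x es vs -> last (x :: vs) x = u -> (forall g, In g es -> Rp st Q e g) ->
  forall y, In y vs -> Xr st Q e u y.
Proof.
  revert x vs; induction es as [|a es IH]; intros x vs Hw Hl HR y Hy.
  - destruct vs; [destruct Hy|destruct Hw].
  - destruct vs as [|w vs]; [destruct Hw|]. destruct Hw as [Hj Hw].
    rewrite last_cons2 in Hl. destruct Hy as [<-|Hy].
    + exists es, vs. split; auto. split; auto. intros g Hg; apply HR; right; auto.
    + eapply IH; eauto. intros g Hg; apply HR; right; auto.
Qed.

Lemma Xr_closed {G : multigraph} st Q e (u : vtx G) g :
  Rp st Q e g -> Xr st Q e u (end1 g) -> Xr st Q e u (end2 g).
Proof.
  intros HR (es & vs & W & L & H). exists (g :: es), (end1 g :: vs).
  split; [split; auto; right; auto|]. split.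
  - rewrite last_cons2. auto.
  - intros h [<-|Hh]; auto.
Qed.

Lemma Xr_closed' {G : multigraph} st Q e (u : vtx G) g :
  Rp st Q e g -> Xr st Q e u (end2 g) -> Xr st Q e u (end1 g).
Proof.
  intros HR (es & vs & W & L & H). exists (g :: es), (end2 g :: vs).
  split; [split; auto; left; auto|]. split.
  - rewrite last_cons2. auto.
  - intros h [<-|Hh]; auto.
Qed.

Lemma Xr_refl {G : multigraph} st Q e (u : vtx G) : Xr st Q e u u.
Proof. exists [], []. split; [exact I|]. split; auto. intros g []. Qed.

Lemma step_cycle {G : multigraph} (s t : vtx G) Ps Cs Q e u :
  Inv s t (Ps, Cs) -> Qgood s t (Ps, Cs) Q -> joins e u t -> ~ delta s e ->
  ~ In e (used (Ps, Cs)) -> ~ sys_edges Q e ->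
  Xr (Ps, Cs) Q e u t ->
  exists c, Inv s t (Ps, Cs ++ [c]) /\ In e (wedges c).
Proof.
  intros (HP & HC & HN & _) HQ Hj Hse Heu HeQ (es & vs & W & L & HR).
  destruct (walk_shorten _ _ _ W) as (es' & vs' & W' & N' & L' & I1 & I2).
  rewrite <- L' in L.
  set (c := MkWalk t (es' ++ [e]) (vs' ++ [t])).
  assert (HRc : forall g, In g (wedges c) -> Rp (Ps, Cs) Q e g \/ g = e).
  { intros g Hg. simpl in Hg. apply in_app_or in Hg. destruct Hg as [Hg|[<-|[]]]; auto. }
  exists c. split; [|simpl; apply in_or_app; right; left; auto].
  split; [exact HP|]. split.
  { intros c' Hc'. simpl in Hc'. apply in_app_or in Hc'. destruct Hc' as [Hc'|[<-|[]]]; auto.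
    split.
    - unfold cycle; simpl. split.
      + apply walk_app; auto. rewrite L. simpl. split; auto.
      + split; [destruct es'; discriminate|]. split.
        * apply NoDup_app. eapply walk_nodup_edges; eauto. repeat constructor; auto.
          intros g Hg [Heg|[]]. destruct (HR g (I1 g Hg)) as (_ & _ & Hne). congruence.
        * split; [apply nodup_snoc; auto|]. apply last_last.
    - intros g Hg. destruct (HRc g Hg) as [H| ->]; auto. eapply Rp_not_s; eauto. }
  split.
  { unfold used; simpl. rewrite app_assoc, flat_map_app. simpl. rewrite app_nil_r.
    apply NoDup_app; auto.
    - apply NoDup_app. eapply walk_nodup_edges; eauto. repeat constructor; auto.
      intros g Hg [Heg|[]]. destruct (HR g (I1 g Hg)) as (_ & _ & Hne). congruence.
    - intros g Hg1 Hg2. destruct (HRc g Hg2) as [(H & _)| ->]; auto. }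
  exists Q. destruct HQ as (HQ1 & HQ2 & HQ3). split; [|split; auto].
  - intros q Hq. split; [apply HQ1; auto|]. intros g Hg Hu.
    unfold used in Hu; simpl in Hu. rewrite app_assoc, flat_map_app in Hu. simpl in Hu.
    rewrite app_nil_r in Hu. apply in_app_or in Hu. destruct Hu as [Hu|Hu].
    + exact (proj2 (HQ1 q Hq) g Hg Hu).
    + destruct (HRc g Hu) as [(_ & H & _)| ->]; apply H || apply HeQ; exists q; auto.
  - intros g Hs Hu. apply HQ3; auto. intro Hu'. apply Hu. unfold used in *; simpl in *.
    rewrite app_assoc, flat_map_app. apply in_or_app; auto.
Qed.

Lemma step_parity {G : multigraph} (s t : vtx G) Ps Cs Q e u :
  inner_eulerian s t -> s <> t ->
  Inv s t (Ps, Cs) -> Qgood s t (Ps, Cs) Q -> joins e u t -> u <> s ->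
  ~ In e (used (Ps, Cs)) -> ~ sys_edges Q e ->
  ~ Xr (Ps, Cs) Q e u t ->
  exists q, Q q /\ exists x, In x (wverts q) /\ Xr (Ps, Cs) Q e u x.
Proof.
  intros IE Hst (HP & HC & HN & _) HQ Hj Hus Heu HeQ HXt.
  apply NNPP. intro Hno.
  set (X := Xr (Ps, Cs) Q e u).
  assert (HXs : ~ X s).
  { intros (es & vs & W & L & HR). destruct es as [|g es].
    - destruct vs; [|destruct W]. simpl in L. auto.
    - destruct vs as [|w vs]; [destruct W|]. destruct W as [Hjg _].
      apply (Rp_not_s s t _ Q e g HQ (HR g (or_introl eq_refl))).
      destruct Hjg as [[H _]|[_ H]]; [left|right]; auto. }
  apply (IE X HXs HXt).
  exists (e :: filter (cutb X) (used (Ps, Cs))). split; [|split].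
  - constructor. rewrite filter_In. tauto. apply NoDup_filter; auto.
  - intros g. split.
    + intros [<-|Hg].
      * unfold cut. destruct Hj as [[-> ->]|[-> ->]]; [left|right]; split; auto; apply Xr_refl.
      * apply filter_In in Hg. apply cutb_spec. tauto.
    + intros Hc. destruct (classic (In g (used (Ps, Cs)))) as [Hu|Hu].
      { right. apply filter_In. split; auto. apply cutb_spec; auto. }
      destruct (classic (g = e)) as [->|Hge]; [left; auto|].
      exfalso. destruct (classic (sys_edges Q g)) as [(r & Hr & Hgr)|HgQ].
      * destruct (proj1 (proj1 HQ r Hr)) as (Hws & W & _).
        destruct (walk_ends _ _ _ _ W Hgr) as [E1 E2].
        assert (K : forall y, In y (s :: wverts r) -> ~ X y).
        { intros y [<-|Hy]; auto. intro Hy'. apply Hno. exists r. split; auto. exists y; auto. }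
        destruct Hc as [[H1 _]|[_ H2]]; [apply (K _ E1)|apply (K _ E2)]; auto.
      * assert (HR : Rp (Ps, Cs) Q e g) by (split; auto).
        destruct Hc as [[H1 H2]|[H1 H2]].
        -- apply H2. apply (Xr_closed _ _ _ _ _ HR H1).
        -- apply H1. apply (Xr_closed' _ _ _ _ _ HR H2).
  - simpl length. rewrite Nat.odd_succ. unfold used. apply even_flat.
    intros w Hw. apply in_app_or in Hw. destruct Hw as [Hw|Hw].
    + destruct (HP w Hw) as (Hws & W & _ & L).
      rewrite (walk_parity X _ _ _ W), L, (decb_false (X s) HXs), (decb_false (X t) HXt). reflexivity.
    + destruct (HC w Hw) as ((W & _ & _ & _ & L) & _).
      rewrite (walk_parity X _ _ _ W), last_cons_same, L. destruct (decb (X (wstart w))); reflexivity.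
Qed.

Lemma step_reroute {G : multigraph} (s t : vtx G) Ps Cs Q e u q x :
  s <> t ->
  Inv s t (Ps, Cs) -> Qgood s t (Ps, Cs) Q -> joins e u t -> u <> s -> ~ delta s e ->
  ~ In e (used (Ps, Cs)) -> ~ sys_edges Q e ->
  ~ Xr (Ps, Cs) Q e u t -> Q q -> In x (wverts q) -> Xr (Ps, Cs) Q e u x ->
  exists q', Inv s t (q' :: Ps, Cs) /\ In e (wedges q').
Proof.
  intros Hst (HP & HC & HN & _) HQ Hj Hus Hse Heu HeQ HXt Hq Hx HXx.
  destruct HQ as (HQ1 & HQ2 & HQ3).
  destruct (HQ1 q Hq) as ((Hqs & Wq & Nq & Lq) & Hqu).
  set (es := wedges q) in *. set (vs := wverts q) in *.
  destruct (walk_split _ _ _ x Wq (or_intror Hx)) as (es1 & es2 & pre & vs1 & vs2 & E1 & E2 & W2 & W1 & L1 & I1).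
  destruct HXx as (esX & vsX & WX & LX & HRX).
  assert (Wa : walk_from s (es1 ++ esX) (vs1 ++ vsX)).
  { apply walk_app; auto. rewrite L1. auto. }
  assert (La : last (s :: vs1 ++ vsX) s = u).
  { rewrite last_app_walk, L1. rewrite <- LX. apply last_indep. }
  destruct (walk_shorten _ _ _ Wa) as (es' & vs' & W' & N' & L' & I1' & I2').
  rewrite La in L'.
  assert (Htx : t <> x). { intros ->. apply HXt. exists esX, vsX. auto. }
  assert (Ht : ~ In t (s :: vs')).
  { intros [Hts|Ht]; [auto|]. apply I2' in Ht. apply in_app_or in Ht. destruct Ht as [Ht|Ht].
    - assert (Ht' : In t (pre ++ [x])) by (apply I1; right; auto).
      apply in_app_or in Ht'. destruct Ht' as [Ht'|[Ht'|[]]]; [|auto].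
      assert (Hl : t = last (x :: vs2) x).
      { rewrite <- Lq, E2, last_app_cons. apply last_indep. }
      assert (Hin : In t (x :: vs2)).
      { rewrite Hl. pose proof (last_in vs2 x) as K. destruct vs2 as [|y vs2]; simpl in *; auto.
        }
      rewrite E2 in Nq. destruct Hin as [Hin|Hin]; [auto|].
      apply (nodup_app_disj pre (x :: vs2) t Nq Ht'); right; auto.
    - apply HXt. exact (Xr_verts _ _ _ _ x esX vsX WX LX HRX t Ht). }
  set (q' := MkWalk s (es' ++ [e]) (vs' ++ [t])).
  assert (Hq'p : st_path s t q').
  { unfold st_path; simpl. split; auto. split.
    - apply walk_app; auto. rewrite L'. simpl; auto.
    - split. apply nodup_snoc2; auto. change (last ((s :: vs') ++ [t]) s = t). apply last_last. }
  assert (Hq'e : forall g, In g (wedges q') -> In g es1 \/ Rp (Ps, Cs) Q e g \/ g = e).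
  { intros g Hg. simpl in Hg. apply in_app_or in Hg. destruct Hg as [Hg|[<-|[]]]; auto.
    apply I1' in Hg. apply in_app_or in Hg. destruct Hg; auto. }
  assert (Hes1 : forall g, In g es1 -> In g es). { intros g Hg. rewrite E1. apply in_or_app; auto. }
  exists q'. split; [|simpl; apply in_or_app; right; left; auto].
  split; [intros p [<-|Hp]; auto|]. split; [exact HC|]. split.
  { unfold used; simpl. apply NoDup_app; auto. exact (st_path_nodup s t q' Hq'p).
    intros g Hg Hu. destruct (Hq'e g Hg) as [H|[(H & _)| ->]]; auto.
    apply (Hqu g (Hes1 g H) Hu). }
  exists (fun r => Q r /\ r <> q). split; [|split].
  - intros r [Hr Hne]. split; [apply HQ1; auto|]. intros g Hg Hu. unfold used in Hu; simpl in Hu.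
    apply in_app_or in Hu. destruct Hu as [Hu|Hu].
    + destruct (Hq'e g Hu) as [H|[(_ & H & _)| ->]].
      * exact (HQ2 r q Hr Hq Hne g Hg (Hes1 g H)).
      * apply H. exists r; auto.
      * apply HeQ. exists r; auto.
    + exact (proj2 (HQ1 r Hr) g Hg Hu).
  - intros p r [Hp _] [Hr _]. apply HQ2; auto.
  - intros g Hs Hu. unfold used in Hu; simpl in Hu.
    destruct (HQ3 g Hs) as (r & Hr & Hg).
    + intro. apply Hu, in_or_app; auto.
    + exists r. split; auto. split; auto. intros ->. apply Hu, in_or_app. left.
      (* q' has an s-edge which is the unique s-edge of q *)
      destruct es' as [|g0 es'].
      { destruct vs'; [|destruct W']. simpl in L'. congruence. }
      destruct vs' as [|w0 vs']; [destruct W'|]. destruct W' as [Hj0 _].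
      assert (Hg0s : incident g0 s) by (destruct Hj0 as [[H _]|[_ H]]; [left|right]; auto).
      assert (Hg0 : In g0 (wedges q')) by (simpl; auto).
      destruct (Hq'e g0 Hg0) as [H|[HR| ->]].
      * rewrite (walk_head_unique _ _ _ g g0 Wq Nq Hg (Hes1 g0 H) Hs Hg0s). auto.
      * exfalso. apply (Rp_not_s s t _ Q e g0 (conj HQ1 (conj HQ2 HQ3)) HR Hg0s).
      * exfalso. auto.
Qed.

Lemma step {G : multigraph} (s t : vtx G) st (e : edg G) :
  s <> t -> inner_eulerian s t -> Inv s t st ->
  exists st', Inv s t st' /\ ext st st' /\ handled s t e st'.
Proof.
  intros Hst IE Hinv. destruct st as [Ps Cs].
  assert (Hext0 : ext (Ps, Cs) (Ps, Cs)) by (split; apply incl_refl).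
  destruct (classic (In e (used (Ps, Cs)))) as [Hu|Hu].
  { exists (Ps, Cs). split; auto. split; auto. apply step_used; auto. }
  pose proof Hinv as (HP & HC & HN & Q & HQ).
  destruct (classic (sys_edges Q e)) as [(q & Hq & Heq)|HeQ].
  { exists (q :: Ps, Cs). destruct (step_Q s t Ps Cs Q q e Hinv HQ Hq Heq) as [H1 H2].
    split; auto. split; auto. split; simpl; [intros y Hy; right; auto|apply incl_refl]. }
  assert (Hse : ~ delta s e).
  { intros Hs. apply HeQ. apply (proj2 (proj2 HQ)); auto. }
  destruct (classic (delta t e)) as [Ht|Ht].
  2:{ exists (Ps, Cs). split; auto. split; auto. split; intros; contradiction. }
  assert (Hu' : exists u, joins e u t).
  { destruct Ht as [H|H]; [exists (end2 e); right|exists (end1 e); left]; auto. }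
  destruct Hu' as [u Hj].
  assert (Hus : u <> s).
  { intros ->. apply Hse. destruct Hj as [[H _]|[_ H]]; [left|right]; auto. }
  destruct (classic (Xr (Ps, Cs) Q e u t)) as [HX|HX].
  - destruct (step_cycle s t Ps Cs Q e u Hinv HQ Hj Hse Hu HeQ HX) as (c & Hc & Hec).
    exists (Ps, Cs ++ [c]). split; auto. split.
    + split; simpl; [apply incl_refl|intros y Hy; apply in_or_app; auto].
    + split; [intros; contradiction|]. intros _. unfold used; simpl.
      rewrite app_assoc, flat_map_app. apply in_or_app; right; simpl; rewrite app_nil_r; auto.
  - destruct (step_parity s t Ps Cs Q e u IE Hst Hinv HQ Hj Hus Hu HeQ HX) as (q & Hq & x & Hx & HXx).
    destruct (step_reroute s t Ps Cs Q e u q x Hst Hinv HQ Hj Hus Hse Hu HeQ HX Hq Hx HXx) as (q' & H1 & H2).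
    exists (q' :: Ps, Cs). split; auto. split.
    + split; simpl; [intros y Hy; right; auto|apply incl_refl].
    + split; [intros; contradiction|]. intros _. unfold used; simpl. apply in_or_app; auto.
Qed.

Lemma nodup_flat_disj {G : multigraph} (L : list (walk G)) p q e :
  NoDup (flat_map (@wedges G) L) -> In p L -> In q L -> p <> q ->
  In e (wedges p) -> In e (wedges q) -> False.
Proof.
  induction L as [|a L IH]; simpl; [tauto|]. intros N Hp Hq Hne Ep Eq.
  destruct Hp as [<-|Hp], Hq as [<-|Hq].
  - auto.
  - apply (nodup_app_disj _ _ e N Ep). apply in_flat_map; eauto.
  - apply (nodup_app_disj _ _ e N Eq). apply in_flat_map; eauto.
  - eapply IH; eauto. eapply NoDup_app_remove_l; eauto.
Qed.

Lemma handled_mono {G : multigraph} (s t : vtx G) e st st' :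
  ext st st' -> handled s t e st -> handled s t e st'.
Proof.
  intros [E1 E2] [H1 H2]. split.
  - intros Hs. specialize (H1 Hs). apply in_flat_map in H1.
    destruct H1 as (p & Hp & He). apply in_flat_map. eauto.
  - intros Ht. specialize (H2 Ht). unfold used in *. apply in_flat_map in H2.
    destruct H2 as (p & Hp & He). apply in_flat_map. exists p. split; auto.
    apply in_app_or in Hp. apply in_or_app. destruct Hp; [left|right]; auto.
Qed.

Lemma stepn {G : multigraph} (s t : vtx G) (f : edg G -> nat) st n :
  (forall e1 e2, f e1 = f e2 -> e1 = e2) ->
  s <> t -> inner_eulerian s t -> Inv s t st ->
  exists st', Inv s t st' /\ ext st st' /\ forall e, f e = n -> handled s t e st'.
Proof.
  intros Hf Hst IE Hinv.
  destruct (classic (exists e, f e = n)) as [(e & He)|Hn].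
  - destruct (step s t st e Hst IE Hinv) as (st' & H1 & H2 & H3).
    exists st'. split; auto. split; auto. intros e' He'.
    rewrite (Hf e' e) by congruence. auto.
  - exists st. split; auto. split; [split; apply incl_refl|]. intros e He. exfalso; eauto.
Qed.

Lemma ext_trans {G : multigraph} (a b c : list (walk G) * list (walk G)) :
  ext a b -> ext b c -> ext a c.
Proof. intros [H1 H2] [H3 H4]. split; eapply incl_tran; eauto. Qed.

Theorem lemma6p2 (G : multigraph) (s t : vtx G) :
  s <> t ->
  inner_eulerian s t ->
  countable_edges G ->
  is_linked s t ->
  exists P : walk G -> Prop,
    linkage s t P /\
    exists C : walk G -> Prop,
      (forall c, C c -> cycle c /\
         forall e, In e (wedges c) -> ~ sys_edges P e) /\
      edge_disjoint_family C /\
      (forall e, delta t e -> ~ sys_edges P e ->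
         exists c, C c /\ In e (wedges c)).
Proof.
  intros Hst IE [f Hf] [P0 [[HP0 HD0] HC0]].
  set (T := {st : list (walk G) * list (walk G) | Inv s t st}).
  assert (Hinit : Inv s t ([], [])).
  { split; [intros p []|]. split; [intros p []|]. split; [constructor|].
    exists P0. split; [|split; [exact HD0|]].
    - intros q Hq. split; [auto|intros e _ []].
    - intros e Hs _. apply HC0; auto. }
  assert (Hs : forall (x : T) (n : nat), {y : T | ext (proj1_sig x) (proj1_sig y) /\
             forall e, f e = n -> handled s t e (proj1_sig y)}).
  { intros [st Hi] n. apply constructive_indefinite_description.
    destruct (stepn s t f st n Hf Hst IE Hi) as (st' & H1 & H2 & H3).
    exists (exist _ st' H1). simpl. auto. }
  set (seq := fix seq (n : nat) : T :=
                match n with 0 => exist _ ([], []) Hinit | S m => proj1_sig (Hs (seq m) m) end).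
  set (S_ n := proj1_sig (seq n)).
  assert (Hinv : forall n, Inv s t (S_ n)) by (intros n; exact (proj2_sig (seq n))).
  assert (Hnext : forall n, ext (S_ n) (S_ (S n)) /\ forall e, f e = n -> handled s t e (S_ (S n))).
  { intros n. exact (proj2_sig (Hs (seq n) n)). }
  assert (Hmono : forall m n, m <= n -> ext (S_ m) (S_ n)).
  { intros m n Hmn. induction Hmn; [split; apply incl_refl|].
    eapply ext_trans; eauto. apply Hnext. }
  assert (Hhand : forall e, handled s t e (S_ (S (f e)))) by (intros e; apply Hnext; auto).
  set (P := fun p => exists n, In p (fst (S_ n))).
  set (C := fun c => exists n, In c (snd (S_ n))).
  assert (Hcommon : forall n1 n2, exists k, ext (S_ n1) (S_ k) /\ ext (S_ n2) (S_ k)).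
  { intros n1 n2. exists (max n1 n2). split; apply Hmono; lia. }
  assert (HN : forall k, NoDup (flat_map (@wedges G) (fst (S_ k)) ++ flat_map (@wedges G) (snd (S_ k)))).
  { intros k. destruct (Hinv k) as (_ & _ & N & _). unfold used in N. rewrite flat_map_app in N. exact N. }
  assert (HPC : forall p c e, P p -> C c -> In e (wedges p) -> In e (wedges c) -> False).
  { intros p c e [n1 Hp] [n2 Hc] Ep Ec. destruct (Hcommon n1 n2) as (k & [A1 _] & [_ B2]).
    apply (nodup_app_disj _ _ e (HN k)); apply in_flat_map; eauto. }
  exists P. split.
  - split.
    + split; [split|].
      * intros p [n Hp]. exact (proj1 (Hinv n) p Hp).
      * intros p q [n1 Hp] [n2 Hq] Hne e Ep Eq.
        destruct (Hcommon n1 n2) as (k & [A1 _] & [A2 _]).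
        apply (nodup_flat_disj _ p q e (NoDup_app_remove_r _ _ (HN k))); auto.
      * intros e Hs'. pose proof (proj1 (Hhand e) Hs') as Hin.
        apply in_flat_map in Hin. destruct Hin as (p & Hp & He). exists p. split; auto. exists (S (f e)); auto.
    + intros p [n Hp]. destruct (proj1 (Hinv n) p Hp) as (Hps & W & _ & L).
      destruct (wedges p) as [|e es]; destruct (wverts p) as [|w vs]; simpl in *; try contradiction.
      * exists e. split; auto. destruct W as [Hj _].
        destruct Hj as [[H _]|[_ H]]; [left|right]; auto.
  - exists C. split; [|split].
    + intros c [n Hc]. split; [exact (proj1 (proj1 (proj2 (Hinv n)) c Hc))|].
      intros e Ec (p & Hp & Ep). apply (HPC p c e Hp (ex_intro _ n Hc) Ep Ec).
    + intros p q [n1 Hp] [n2 Hq] Hne e Ep Eq.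
      destruct (Hcommon n1 n2) as (k & [_ A1] & [_ A2]).
      apply (nodup_flat_disj _ p q e (NoDup_app_remove_l _ _ (HN k))); auto.
    + intros e Ht HnP. pose proof (proj2 (Hhand e) Ht) as Hin. unfold used in Hin.
      apply in_flat_map in Hin. destruct Hin as (p & Hp & He). apply in_app_or in Hp.
      destruct Hp as [Hp|Hp].
      * exfalso. apply HnP. exists p. split; auto. exists (S (f e)); auto.
      * exists p. split; auto. exists (S (f e)); auto.
Qed.
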